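(* Let $A\twoheadrightarrow A'$ be a surjection of finite local $k$-algebras whose kernel $J$ satisfies $J^2=0$. Let $I'\subseteq S_{A'}$ and $I\subseteq S_A$ be graded submodules such that (1) $I'_2\subseteq q^\perp\otimes A'$; (2) $(S_A/I)_2$ is a free $A$-module; (3) the image of $I_2$ in $(S_{A'})_2$ is $I'_2$. Then there exists $g\in\mathrm{GL}_n(A)$ with $g\equiv\mathrm{Id}_n \pmod J$ and $(g\circ I)_2\subseteq q^\perp\otimes A$.
   Context: Let $k$ be a field of characteristic zero, $S=k[x_1,\dots,x_n]$, $T=k[y_1,\dots,y_n]$, with $S$ acting on $T$ by differentiation; for $f\in T_d$, $f^\perp=\{g\in S:g\circ f=0\}$. Fix a full rank quadratic form $q\in T_2$. For a $k$-algebra $A$, $S_A=S\otimes_kA=A[x_1,\dots,x_n]$, and $q^\perp\otimes A\subseteq S_A$ denotes the extension of $q^\perp$ (in degree 2, the $A$-submodule of $(S_A)_2$ annihilating $q$). $\mathrm{GL}_n(A)$ acts on $S_A$ by $A$-linear substitution of the variables $x_1,\dots,x_n$, and $g\circ I$ denotes the image of $I$. *)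

(* Defs.v *)
From HB Require Import structures.
From mathcomp Require Import all_boot all_order all_algebra.
From mathcomp Require Import mpoly.
Set Implicit Arguments. Unset Strict Implicit. Unset Printing Implicit Defensive.
Import GRing.Theory.
Local Open Scope ring_scope.

Definition fin_dim (k : fieldType) (A : comUnitAlgType k) : Prop :=
  exists s : seq A, forall a : A,
    exists c : 'I_(size s) -> k, a = \sum_(i < size s) c i *: s`_i.

(* A is local: the non-units form an ideal (A is nonzero since it is a nzRing). *)
Definition is_local (A : comUnitRingType) : Prop :=
  forall x y : A, x \isn't a GRing.unit -> y \isn't a GRing.unit ->
    (x + y) \isn't a GRing.unit.

(* Apolarity action of S_A on T_A by differentiation:
   (sum_m g_m x^m) o h = sum_m g_m d^m h. *)
Definition apolar (n : nat) (A : ringType) (g h : {mpoly A[n]}) : {mpoly A[n]} :=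
  \sum_(m <- msupp g) g@_m *: mderivm m h.

(* Degree-2 part of q^perp (x) A : the degree-2 forms annihilating q. *)
Definition qperp2 (k : fieldType) (A : comUnitAlgType k) (n : nat)
    (q : {mpoly k[n]}) (g : {mpoly A[n]}) : Prop :=
  g \is 2.-homog /\ apolar g (map_mpoly (in_alg A) q) = 0.

(* Hessian matrix of a quadratic form; q has full rank iff it is invertible. *)
Definition hessian (k : fieldType) (n : nat) (q : {mpoly k[n]}) : 'M[k]_n :=
  \matrix_(i < n, j < n) ((mderiv j (mderiv i q))@_0%MM).

Definition full_rank_quadric (k : fieldType) (n : nat) (q : {mpoly k[n]}) : Prop :=
  q \is 2.-homog /\ hessian q \in unitmx.

Definition act (A : comRingType) (n : nat) (g : 'M[A]_n) (p : {mpoly A[n]})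
    : {mpoly A[n]} :=
  p \mPo [tuple \sum_(j < n) g i j *: 'X_j | i < n].

Definition hcomp (A : ringType) (n : nat) (d : nat) (p : {mpoly A[n]})
    : {mpoly A[n]} :=
  \sum_(m <- msupp p | mdeg m == d) p@_m *: 'X_[m].

Definition graded_submod (A : comRingType) (n : nat) (I : {mpoly A[n]} -> Prop)
    : Prop :=
  [/\ I 0,
      (forall p r, I p -> I r -> I (p + r)),
      (forall (a : A) p, I p -> I (a *: p)) &
      (forall d p, I p -> I (hcomp d p))].

(* (S_A/I)_2 is a free A-module: there are b_1..b_r in (S_A)_2 whose classes
   form a basis of (S_A)_2 / I_2. *)
Definition free_quot2 (A : comRingType) (n : nat) (I : {mpoly A[n]} -> Prop)
    : Prop :=
  exists r (b : 'I_r -> {mpoly A[n]}),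
    [/\ (forall i, b i \is 2.-homog),
        (forall p : {mpoly A[n]}, p \is 2.-homog ->
           exists c : 'I_r -> A, I (p - \sum_(i < r) c i *: b i)) &
        (forall c : 'I_r -> A, I (\sum_(i < r) c i *: b i) -> forall i, c i = 0)].

(* Main.v *)
Require Import Defs.
From HB Require Import structures.
From mathcomp Require Import all_boot all_order all_algebra.
From mathcomp Require Import mpoly.
From mathcomp.multinomials Require Import ssrcomplements.
From Stdlib Require Import IndefiniteDescription.
Import GRing.Theory.
Local Open Scope ring_scope.
Set Implicit Arguments. Unset Strict Implicit.
Lemma homog2_msize (n : nat) (R : ringType) (p : {mpoly R[n]}) :
  p \is 2.-homog -> (msize p <= 3)%N.
Proof.
move=> hp; rewrite mmeasureE; apply/bigmax_leqP_seq => m + _ => /(dhomog_mf hp) -> //.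
Qed.

Lemma apolarE (n : nat) (R : ringType) (p h : {mpoly R[n]}) : (msize p <= 3)%N ->
  apolar p h = \sum_(m : 'X_{1..n < 3}) p@_m *: mderivm m h.
Proof.
pose I : subFinType _ := 'X_{1..n < 3}.
move=> le_pk; rewrite /apolar (big_mksub I) /=; first last.
  by move=> x /msize_mdeg_lt/leq_trans/(_ le_pk).
  by rewrite msupp_uniq.
rewrite big_rmcond //= => j /memN_msupp_eq0 ->.
by rewrite scale0r.
Qed.

Definition L0 (n : nat) (R : ringType) (h p : {mpoly R[n]}) : R :=
  \sum_(m : 'X_{1..n < 3}) p@_m * (mderivm m h)@_0.

Lemma L0D (n : nat) (R : ringType) (h p r : {mpoly R[n]}) :
  L0 h (p + r) = L0 h p + L0 h r.
Proof. by rewrite /L0 -big_split; apply: eq_bigr => m _; rewrite mcoeffD mulrDl. Qed.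

Lemma L0Z (n : nat) (R : ringType) (h p : {mpoly R[n]}) c :
  L0 h (c *: p) = c * L0 h p.
Proof. by rewrite /L0 mulr_sumr; apply: eq_bigr => m _; rewrite mcoeffZ mulrA. Qed.

Lemma L00 (n : nat) (R : ringType) (h : {mpoly R[n]}) : L0 h 0 = 0.
Proof. by rewrite /L0 big1 // => m _; rewrite mcoeff0 mul0r. Qed.

Lemma L0N (n : nat) (R : ringType) (h p : {mpoly R[n]}) : L0 h (- p) = - L0 h p.
Proof. by rewrite -scaleN1r L0Z mulN1r. Qed.

Lemma L0B (n : nat) (R : ringType) (h p r : {mpoly R[n]}) :
  L0 h (p - r) = L0 h p - L0 h r.
Proof. by rewrite L0D L0N. Qed.

Lemma L0_sum (n : nat) (R : ringType) (h : {mpoly R[n]}) (T : Type) (s : seq T)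
  (P : pred T) (F : T -> {mpoly R[n]}) :
  L0 h (\sum_(i <- s | P i) F i) = \sum_(i <- s | P i) L0 h (F i).
Proof.
elim/big_rec2: _ => [|i x y _ <-]; first exact: L00.
by rewrite L0D.
Qed.

Lemma mderivm_const (n : nat) (R : ringType) (h : {mpoly R[n]}) m :
  h \is 2.-homog -> mdeg m = 2%N -> mderivm m h = ((mderivm m h)@_0)%:MP.
Proof.
move=> hh dm; apply/mpolyP => m'; rewrite mcoeffC.
have [->|nz] := eqVneq m' 0%MM; first by rewrite mulr1.
rewrite mulr0 mcoeff_mderivm (dhomog_nemf_coeff hh) ?mul0rn //.
idtac.
change (mdeg (m + m')%MM != 2%N); rewrite mdegD dm; apply/negP => /eqP h2.
by move: nz; rewrite -mdeg_eq0 -(eqn_add2l 2) addn0 h2 eqxx.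
Qed.

Lemma scale_mpolyC (n : nat) (R : comRingType) (a c : R) :
  a *: (c%:MP : {mpoly R[n]}) = (a * c)%:MP.
Proof. by rewrite -mul_mpolyC -rmorphM. Qed.

Lemma apolar_const (n : nat) (R : comRingType) (p h : {mpoly R[n]}) :
  p \is 2.-homog -> h \is 2.-homog -> apolar p h = (L0 h p)%:MP.
Proof.
move=> hp hh; rewrite apolarE ?homog2_msize // /L0 raddf_sum /=.
apply: eq_bigr => m _.
have [dm|ndm] := eqVneq (mdeg m) 2%N.
  by rewrite {1}(mderivm_const hh dm) scale_mpolyC.
by rewrite (dhomog_nemf_coeff hp ndm) scale0r mul0r mpolyC0.
Qed.

Lemma map_mderivm (n : nat) (R S : ringType) (phi : {rmorphism R -> S}) m
  (p : {mpoly R[n]}) :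
  map_mpoly phi (mderivm m p) = mderivm m (map_mpoly phi p).
Proof.
by apply/mpolyP => m'; rewrite mcoeff_map_mpoly !mcoeff_mderivm raddfMn mcoeff_map_mpoly.


Qed.

Lemma mdeg2P (n : nat) (m : 'X_{1..n}) : mdeg m = 2%N ->
  exists i j, m = (U_(i) + U_(j))%MM.
Proof.
move=> dm.
have [i mi] : exists i, m i != 0%N.
  case: (boolP [exists i, m i != 0%N]) => [/existsP //|].
  rewrite negb_exists => /forallP h.
  have : m = 0%MM by apply/mnmP => i; rewrite mnm0E; apply/eqP; rewrite -[_ == _]negbK h.
  by move=> m0; move: dm; rewrite m0 mdeg0.
have le : (U_(i) <= m)%MM by rewrite lep1mP.
have d1 : mdeg (m - U_(i))%MM = 1%N.
  have := mdegD (m - U_(i))%MM U_(i); rewrite submK // dm mdeg1 => /eqP.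
  by rewrite -[2%N]/(1 + 1)%N eqn_add2r => /eqP.
have /mdeg1P [j /eqP hj] : mdeg (m - U_(i))%MM == 1%N by rewrite d1.
exists i, j; by rewrite -hj addmC submK.
Qed.
Lemma act_X (n : nat) (A : comRingType) (g : 'M[A]_n) i :
  act g 'X_i = \sum_(j < n) g i j *: 'X_j.
Proof. by rewrite /act comp_mpolyXU -tnth_nth tnth_mktuple. Qed.

Lemma actM (n : nat) (A : comRingType) (g : 'M[A]_n) p r :
  act g (p * r) = act g p * act g r.
Proof. by rewrite /act rmorphM. Qed.

Lemma actD (n : nat) (A : comRingType) (g : 'M[A]_n) p r :
  act g (p + r) = act g p + act g r.
Proof. by rewrite /act raddfD. Qed.

Lemma actB (n : nat) (A : comRingType) (g : 'M[A]_n) p r :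
  act g (p - r) = act g p - act g r.
Proof. by rewrite /act raddfB. Qed.

Lemma actZ (n : nat) (A : comRingType) (g : 'M[A]_n) c p :
  act g (c *: p) = c *: act g p.
Proof. by rewrite /act comp_mpolyZ. Qed.

Lemma act_sum (n : nat) (A : comRingType) (g : 'M[A]_n) (T : Type) (s : seq T)
  (P : pred T) (F : T -> {mpoly A[n]}) :
  act g (\sum_(i <- s | P i) F i) = \sum_(i <- s | P i) act g (F i).
Proof. by rewrite /act raddf_sum. Qed.

Lemma lin_homog (n : nat) (A : comRingType) (c : 'I_n -> A) :
  \sum_(j < n) c j *: 'X_j \is 1.-homog.
Proof.
apply: rpred_sum => j _; apply: rpredZ; rewrite dhomogX; apply/eqP; exact: mdeg1.
Qed.

Lemma act_homog (n : nat) (A : comRingType) (g : 'M[A]_n) d p :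
  p \is d.-homog -> act g p \is d.-homog.
Proof.
move=> hp; rewrite /act comp_mpolyE big_seq; apply: rpred_sum => m /(dhomog_mf hp) dm.
apply: rpredZ.
have -> : d = (\sum_(i < n) m i)%N by rewrite -dm; exact: mdegE.
elim/big_rec2: _ => [|i x y _ hy]; first exact: dhomog1.
apply: dhomogM hy.
have := dhomogMn (m i) (lin_homog (fun j => g i j)); rewrite mul1n tnth_mktuple; exact.

Qed.
Lemma map_homog (n : nat) (R S : ringType) (phi : {additive R -> S}) d
  (p : {mpoly R[n]}) : p \is d.-homog -> map_mpoly phi p \is d.-homog.
Proof.
move=> hp; apply/dhomogP => m; rewrite mcoeff_msupp mcoeff_map_mpoly => nz.
apply: (dhomog_mf hp); rewrite mcoeff_msupp; apply: contraNneq nz => ->.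
by rewrite raddf0.
Qed.

Lemma L0X (n : nat) (R : ringType) (h : {mpoly R[n]}) m : (mdeg m < 3)%N ->
  L0 h 'X_[m] = (mderivm m h)@_0.
Proof.
move=> hm; rewrite /L0 (bigD1 (BMultinom hm)) //= big1 ?addr0.
  by rewrite mcoeffX eqxx mul1r.
move=> m' ne; rewrite mcoeffX; case: eqP => [e|]; last by rewrite mul0r.
by move: ne; rewrite bmeqP /= -e eqxx.
Qed.

Lemma Isum (n : nat) (A : comRingType) (I : {mpoly A[n]} -> Prop)
  (gI : graded_submod I) (T : Type) (s : seq T) (P : pred T) (F : T -> {mpoly A[n]}) :
  (forall i, P i -> I (F i)) -> I (\sum_(i <- s | P i) F i).
Proof.
case: gI => I0 ID _ _ hF; elim/big_rec: _ => // i x Pi hx; exact: ID (hF i Pi) hx.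
Qed.
Unset Implicit Arguments.
Theorem theorem2p4
  (k : fieldType) (chark : [pchar k] =i pred0)
  (n : nat) (q : {mpoly k[n]}) (hq : full_rank_quadric q)
  (A A' : comUnitAlgType k)
  (finA : fin_dim A) (locA : is_local A)
  (finA' : fin_dim A') (locA' : is_local A')
  (f : {lrmorphism A -> A'})
  (f_surj : forall a' : A', exists a : A, f a = a')
  (J2 : forall x y : A, f x = 0 -> f y = 0 -> x * y = 0)
  (I : {mpoly A[n]} -> Prop) (I' : {mpoly A'[n]} -> Prop)
  (gI : graded_submod I) (gI' : graded_submod I')
  (h1 : forall p' : {mpoly A'[n]}, I' p' -> p' \is 2.-homog -> qperp2 q p')
  (h2 : free_quot2 I)
  (h3 : forall p' : {mpoly A'[n]},
      (I' p' /\ p' \is 2.-homog) <->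
      (exists p : {mpoly A[n]}, [/\ I p, p \is 2.-homog & map_mpoly f p = p'])) :
  exists g : 'M[A]_n,
    [/\ g \in unitmx,
        map_mx f g = 1%:M &
        forall p' : {mpoly A[n]}, (exists p, I p /\ act g p = p') ->
          p' \is 2.-homog -> qperp2 q p'].
Proof.
have [qh Hu] := hq.
set q1 := map_mpoly (in_alg A) q.
have q1h : q1 \is 2.-homog by apply: map_homog.

set HA : 'M[A]_n := map_mx (in_alg A) (hessian q).
have LamXX : forall i j, L0 q1 ('X_i * 'X_j) = HA i j.
  move=> i j; rewrite -mpolyXD L0X; last first.
    by rewrite mdegD !mdeg1.
  rewrite mderivmDm !mderivmU1m /q1.
  rewrite -!mderivmU1m -!map_mderivm mcoeff_map_mpoly /HA mxE /hessian mxE.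
  by rewrite !mderivmU1m.
have HAs : forall i j, HA i j = HA j i.
  by move=> i j; rewrite -!LamXX mulrC.
have HAu : HA \in unitmx.
  by rewrite unitmxE det_map_mx rmorph_unit // -unitmxE; case: hq.
have [r [b [hb hspan hind]]] := h2.
have cfP : forall p : {mpoly A[n]}, {c : 'I_r -> A |
    p \is 2.-homog -> I (p - \sum_(i < r) c i *: b i)}.
  move=> p; apply: constructive_indefinite_description.
  case: (boolP (p \is 2.-homog)) => hp.
    by have [c hc] := hspan p hp; exists c.
  by exists (fun _ => 0).
pose cf p := sval (cfP p).
pose rr p := p - \sum_(i < r) cf p i *: b i.
have rrI : forall p, p \is 2.-homog -> I (rr p) by move=> p; exact: (svalP (cfP p)).
have sumbh : forall c : 'I_r -> A, \sum_(i < r) c i *: b i \is 2.-homog.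
  by move=> c; apply: rpred_sum => i _; apply: rpredZ; apply: hb.
have rrh : forall p, p \is 2.-homog -> rr p \is 2.-homog.
  by move=> p hp; rewrite /rr rpredB.
have fin_alg : forall (a : k), f (in_alg A a) = in_alg A' a.
  by move=> a; rewrite /= rmorph_alg.
have mapq : map_mpoly f q1 = map_mpoly (in_alg A') q.
  by apply/mpolyP => m; rewrite !mcoeff_map_mpoly; exact: fin_alg.
have LamJ : forall P, I P -> P \is 2.-homog -> f (L0 q1 P) = 0.
  move=> P IP hP.
  have [I'P hP'] : I' (map_mpoly f P) /\ map_mpoly f P \is 2.-homog.
    by apply/h3; exists P.
  have [_ ap] := h1 _ I'P hP'.
  move: ap; rewrite apolar_const //; last exact: map_homog.
  move/eqP; rewrite mpolyC_eq0 => /eqP <-.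
  rewrite /L0 rmorph_sum; apply: eq_bigr => m _.
  by rewrite rmorphM mcoeff_map_mpoly -mapq -(map_mderivm f) mcoeff_map_mpoly.
have X1 : forall i : 'I_n, ('X_i : {mpoly A[n]}) \is 1.-homog.
  by move=> i; rewrite dhomogX; apply/eqP; exact: mdeg1.
have Xh : forall i j : 'I_n, ('X_i * 'X_j : {mpoly A[n]}) \is 2.-homog.
  by move=> i j; exact: (dhomogM (X1 i) (X1 j)).
pose Psi : 'M[A]_n := \matrix_(i, j) L0 q1 (rr ('X_i * 'X_j)).
have Psis : forall i j, Psi i j = Psi j i by move=> i j; rewrite !mxE mulrC.
have PsiJ : forall i j, f (Psi i j) = 0.
  by move=> i j; rewrite mxE; apply: LamJ; [apply: rrI | apply: rrh].
have h2k : (2%:R : k) != 0 by rewrite ((pcharf0P _).1 chark 2).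
pose c2 : A := in_alg A (2%:R^-1 : k).
have c2two : c2 * 2%:R = 1.
  by rewrite /c2 -[2%:R : A](rmorph_nat (in_alg A)) -rmorphM mulVf // rmorph1.
pose E : 'M[A]_n := - (c2 *: (Psi *m invmx HA)).
have EJ : forall i j, f (E i j) = 0.
  move=> i j; rewrite !mxE rmorphN rmorphM rmorph_sum big1 ?mulr0 ?oppr0 //.
  move=> l _; rewrite rmorphM.
  by transitivity (0 * f (invmx HA l j)); [congr (_ * _); exact: PsiJ | exact: mul0r].
have EHm : E *m HA = - (c2 *: Psi) by rewrite /E mulNmx -scalemxAl mulmxKV.
have EH : forall i j, \sum_k E i k * HA k j = - (c2 * Psi i j).
  by move=> i j; have := congr1 (fun M : 'M[A]_n => M i j) EHm; rewrite !mxE.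
have EE : forall i j l m, E i j * E l m = 0 by move=> *; apply: J2; apply: EJ.
pose g : 'M[A]_n := 1%:M + E.
have EEm : E *m E = 0.
  by apply/matrixP => i j; rewrite !mxE big1 // => l _; apply: EE.
have gu : g *m (1%:M - E) = 1%:M.
  by rewrite /g mulmxDl mul1mx mulmxBr mulmx1 EEm subr0 subrK.
have gunit : g \in unitmx by have [] := mulmx1_unit gu.
have gmap : map_mx f g = 1%:M.
  rewrite /g map_mxD map_mx1.
  have -> : map_mx f E = 0 by apply/matrixP => i j; rewrite [LHS]mxE [RHS]mxE; exact: EJ.
  by rewrite addr0.
have actgX : forall i, act g 'X_i = 'X_i + \sum_(l < n) E i l *: 'X_l.
  move=> i; rewrite act_X.
  under eq_bigr do rewrite [g _ _]mxE scalerDl.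
  rewrite big_split /=; congr (_ + _).
  rewrite (bigD1 i) //= big1 ?addr0; first by rewrite mxE eqxx scale1r.
  by move=> j /negbTE ne; rewrite mxE eq_sym ne scale0r.
have uu : forall i j, (\sum_(l < n) E i l *: 'X_l) * (\sum_(l < n) E j l *: 'X_l)
    = 0 :> {mpoly A[n]}.
  move=> i j; rewrite mulr_suml big1 // => a _.
  rewrite -scalerAl mulr_sumr scaler_sumr big1 // => c _.
  by rewrite -scalerAr scalerA EE scale0r.
have LamAct : forall i j, L0 q1 (act g ('X_i * 'X_j)) = HA i j - Psi i j.
  move=> i j; rewrite actM !actgX mulrDl !mulrDr uu addr0 !L0D.
  rewrite mulr_sumr mulr_suml !L0_sum LamXX.
  under eq_bigr do rewrite -scalerAr L0Z LamXX.
  under [X in _ + _ + X]eq_bigr do rewrite -scalerAl L0Z LamXX.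
  rewrite EH.
  under eq_bigr do rewrite HAs.
  rewrite EH Psis -addrA -opprD -mulrDl -mulr2n -mulr_natl.
  by rewrite [2 * c2]mulrC c2two mul1r.
have K : forall m, mdeg m = 2%N ->
    L0 q1 (act g 'X_[m]) = L0 q1 'X_[m] - L0 q1 (rr 'X_[m]).
  move=> m /mdeg2P [i [j ->]]; rewrite mpolyXD LamAct LamXX; congr (_ - _).
  by rewrite mxE.
have Isc : forall p r0, I p -> I r0 -> I (p - r0).
  case: gI => _ ID IZ _ p r0 hp hr; apply: ID => //.
  by rewrite -scaleN1r; apply: IZ.
have Z : forall P, I P -> P \is 2.-homog -> L0 q1 (act g P) = 0.
  move=> P IP hP.
  have PE := pihomogwE mdeg 2 (homog2_msize hP).
  rewrite (pihomog_dE hP) in PE.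
  pose Q := \sum_(m : 'X_{1..n < 3} | mdeg m == 2%N) P@_m *: ('X_[m] - rr 'X_[m]).
  have -> : L0 q1 (act g P) = L0 q1 Q.
    rewrite {1}PE act_sum !L0_sum; apply: eq_bigr => m /eqP dm.
    by rewrite actZ !L0Z K // [in RHS]L0B.
  have QI : I Q.
    have -> : Q = P - \sum_(m : 'X_{1..n < 3} | mdeg m == 2%N) P@_m *: rr 'X_[m].
      by rewrite /Q; under eq_bigr do rewrite scalerBr; rewrite sumrB -PE.
    apply: Isc => //; apply: Isum => // m /eqP dm.
    case: gI => _ _ IZ _; apply: IZ; apply: rrI.
    by rewrite dhomogX; apply/eqP.
  have QE : Q = \sum_(i < r)
      (\sum_(m : 'X_{1..n < 3} | mdeg m == 2%N) P@_m * cf 'X_[m] i) *: b i.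
    rewrite /Q; under eq_bigr do rewrite {1}/rr opprB addrC subrK scaler_sumr.
    rewrite exchange_big; apply: eq_bigr => i _; rewrite scaler_suml.
    by apply: eq_bigr => m _; rewrite scalerA.
  rewrite QE in QI; have c0 := hind _ QI.
  by rewrite QE big1 ?L00 // => i _; rewrite c0 scale0r.
exists g; split => // p' [p [Ip <-]] hp'.
have P2I : I (hcomp 2 p) by case: gI => _ _ _ Ih; apply: Ih.
have hcE : hcomp 2 p = pihomog mdeg 2 p by [].
have P2h : hcomp 2 p \is 2.-homog by rewrite hcE; apply: pihomogP.
have eqa : act g p = act g (hcomp 2 p).
  have hpE := @pihomog_partitionE _ _ mdeg _ _ (leq_addr 3 (msize p)).
  have lt2 : (2 < msize p + 3)%N by rewrite addnC ltn_addr.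
  rewrite -(pihomog_dE hp') {1}hpE act_sum raddf_sum (bigD1 (Ordinal lt2)) //=.
  rewrite big1 ?addr0; first by rewrite pihomog_dE // -hcE; apply: act_homog.
  move=> i ne; apply: (@pihomog_ne0 _ _ _ i); last by apply: act_homog; apply: pihomogP.
  by apply: contraNneq ne => e; apply/eqP/val_inj; rewrite /= e.
split => //.
by rewrite apolar_const // eqa Z.
Qed.
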